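(* Let $d=2\delta$, $H\ge1$, $T_{\max}\ge2$, and consider the orthogonal setting of the context. Let $\theta^*=(\mathtt{A}^*,\mathtt{B}^*,P^* )$ satisfy $\ell(\theta^* )=0$, and set $\mathtt{C}^*=\mathtt{B}^{*\top}\mathtt{A}^*$. Then for every $T\in\{2,\dots,T_{\max}\}$, writing $p^*=(P^*_{T-1,1},\dots,P^*_{T-1,T})$: (i) $p^*_t=0$ for all $t<T-1$; (ii) $p^*_T\,\mathtt{C}^*_{i,i}=1$ for all $i\in\{1,\dots,d\}$; (iii) for every $i\in\{1,\dots,\delta\}$: $p^*_T\mathtt{C}^*_{2i-1,2i}+(\mathtt{C}^*_{2i-1,2i-1}+\mathtt{C}^*_{2i-1,2i})p^*_{T-1}=0$ and $p^*_T\mathtt{C}^*_{2i,2i-1}+(\mathtt{C}^*_{2i,2i}+\mathtt{C}^*_{2i,2i-1})p^*_{T-1}=0$; (iv) $\mathtt{C}^*_{2i-1,j}=\mathtt{C}^*_{2i,j}=0$ for all $i\in\{1,\dots,\delta\}$ and $j\notin\{2i-1,2i\}$.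
   Context: Orthogonal setting: $\mu\in\mathbb{C}^\delta$ has i.i.d. coordinates uniform on the unit circle, $\lambda=(\mu_1,\bar\mu_1,\dots,\mu_\delta,\bar\mu_\delta)\in\mathbb{C}^d$, and $s_t=e_t=\lambda^{t-1}$ (coordinatewise powers). Parameters $\mathtt{A},\mathtt{B}\in\mathbb{R}^{H\times d}$ with rows $a_h,b_h\in\mathbb{R}^d$ and $P\in\mathbb{R}^{T_{\max}\times T_{\max}}$. Model: $\mathcal{T}_\theta(e_{1:T})=\sum_{h=1}^H\sum_{t=1}^T P_{T-1,t}\langle e_t,\mathrm{diag}(a_h)e_{T-1}\rangle_{\mathbb{C}}\mathrm{diag}(b_h)e_t$, $\langle x,y\rangle_{\mathbb{C}}=\sum_i x_i\bar y_i$. Loss: $\ell(\theta)=\sum_{T=2}^{T_{\max}}\mathbb{E}\|\mathcal{T}_\theta(e_{1:T})-s_{T+1}\|^2$ (Hermitian norm). *)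

(* Defs.v *)
From Stdlib Require Import Reals Arith.
From Coquelicot Require Import Coquelicot.

Open Scope R_scope.

Definition csum (f : nat -> C) (m n : nat) : C := sum_n_m f m n.
Definition rsum (f : nat -> R) (m n : nat) : R := sum_n_m f m n.

(* Angles phi : nat -> R parametrise mu; mu_k = exp(i phi_k), k = 1..delta. *)
Definition mu (phi : nat -> R) (k : nat) : C := (cos (phi k), sin (phi k)).

(* lambda = (mu_1, conj mu_1, ..., mu_delta, conj mu_delta), 1-based index i. *)
Definition lam (phi : nat -> R) (i : nat) : C :=
  if Nat.odd i then mu phi ((i + 1) / 2) else Cconj (mu phi (i / 2)).

(* e_t = s_t = lambda^(t-1) coordinatewise, t >= 1. *)
Definition e (phi : nat -> R) (t i : nat) : C := pow_n (lam phi i) (t - 1).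

Definition cinner (d : nat) (x y : nat -> C) : C :=
  csum (fun i => Cmult (x i) (Cconj (y i))) 1 d.

(* Parameters: A, B : rows h = 1..H, columns i = 1..d; P indexed 1..Tmax. *)
Definition model (d H : nat) (A B P : nat -> nat -> R) (phi : nat -> R)
    (T i : nat) : C :=
  csum (fun h =>
    csum (fun t =>
      Cmult (Cmult (RtoC (P (T - 1)%nat t))
                   (cinner d (e phi t) (fun j => Cmult (RtoC (A h j)) (e phi (T - 1)%nat j))))
            (Cmult (RtoC (B h i)) (e phi t i))) 1 T) 1 H.

Definition sqerr (d H : nat) (A B P : nat -> nat -> R) (phi : nat -> R) (T : nat) : R :=
  rsum (fun i => (Cmod (Cminus (model d H A B P phi T i) (e phi (T + 1)%nat i))) ^ 2) 1 d.

Definition upd (phi : nat -> R) (k : nat) (x : R) : nat -> R :=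
  fun j => if Nat.eqb j k then x else phi j.

(* Expectation over phi_1, ..., phi_n i.i.d. uniform on [0, 2 pi]
   (i.e. mu_1..mu_n i.i.d. uniform on the unit circle), as an iterated
   normalised integral. *)
Fixpoint expect (n : nat) (f : (nat -> R) -> R) : R :=
  match n with
  | O => f (fun _ => 0)
  | S m => / (2 * PI) *
      RInt (fun x => expect m (fun phi => f (upd phi (S m) x))) 0 (2 * PI)
  end.

Definition loss (delta H Tmax : nat) (A B P : nat -> nat -> R) : R :=
  rsum (fun T => expect delta (fun phi => sqerr (2 * delta) H A B P phi T)) 2 Tmax.

Definition Cmat (H : nat) (A B : nat -> nat -> R) (i j : nat) : R :=
  rsum (fun h => B h i * A h j) 1 H.

(* Main.v *)
Require Import Defs.
From Stdlib Require Import Reals Arith Lia Lra ZArith FunctionalExtensionality.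
From Coquelicot Require Import Coquelicot.
Open Scope R_scope.

Fixpoint dst (K : nat) (f g : nat -> R) : R :=
  match K with O => 0 | S K' => Rabs (f (S K') - g (S K')) + dst K' f g end.

Lemma dst_nonneg K f g : 0 <= dst K f g.
Proof. induction K; simpl; [lra|]. pose proof (Rabs_pos (f (S K) - g (S K))); lra. Qed.

Lemma dst_upd K f g k x : dst K (upd f k x) (upd g k x) <= dst K f g.
Proof.
  induction K; simpl; [lra|]. unfold upd at 1 2. destruct (Nat.eqb (S K) k).
  - replace (x - x) with 0 by ring. rewrite Rabs_R0. pose proof (Rabs_pos (f (S K) - g (S K))). lra.
  - lra.
Qed.

Lemma dst_upd_out K f k x y : (K < k)%nat -> dst K (upd f k x) (upd f k y) = 0.
Proof.
  induction K; intros H; simpl; [lra|]. unfold upd at 1 2.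
  destruct (Nat.eqb_spec (S K) k); [lia|]. rewrite IHK by lia.
  replace (f (S K) - f (S K)) with 0 by ring. rewrite Rabs_R0. lra.
Qed.

Lemma dst_upd2 K f k x y : dst K (upd f k x) (upd f k y) <= Rabs (x - y).
Proof.
  induction K; simpl. apply Rabs_pos. unfold upd at 1 2.
  destruct (Nat.eqb_spec (S K) k).
  - rewrite dst_upd_out by lia. lra.
  - replace (f (S K) - f (S K)) with 0 by ring. rewrite Rabs_R0. lra.
Qed.

Lemma dst_coord K f g k : (1 <= k <= K)%nat -> Rabs (f k - g k) <= dst K f g.
Proof.
  induction K; intros H; [lia|]. simpl. destruct (Nat.eq_dec k (S K)).
  - subst. pose proof (dst_nonneg K f g). lra.
  - pose proof (Rabs_pos (f (S K) - g (S K))). pose proof (IHK ltac:(lia)). lra.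
Qed.

Definition Lip (K : nat) (f : (nat -> R) -> R) :=
  exists L, 0 <= L /\ forall p q, Rabs (f p - f q) <= L * dst K p q.

Lemma Lip_upd K f k x : Lip K f -> Lip K (fun p => f (upd p k x)).
Proof.
  intros [L [HL H]]. exists L; split; auto. intros p q.
  eapply Rle_trans; [apply H|]. apply Rmult_le_compat_l; auto. apply dst_upd.
Qed.

Lemma lip1_cont (F : R -> R) L x :
  0 <= L -> (forall a b, Rabs (F a - F b) <= L * Rabs (a - b)) -> continuous F x.
Proof.
  intros HL H. apply continuity_pt_filterlim. intros eps Heps.
  exists (eps / (L + 1)). split. apply Rdiv_lt_0_compat; lra.
  intros y [_ Hy]. simpl in *. unfold R_dist in *.
  eapply Rle_lt_trans; [apply H|].
  apply Rle_lt_trans with ((L+1) * Rabs (y - x)).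
  apply Rmult_le_compat_r; [apply Rabs_pos|lra].
  apply Rlt_le_trans with ((L+1) * (eps / (L+1))).
  apply Rmult_lt_compat_l; lra. right; field; lra.
Qed.

Lemma PI2_pos : 0 < 2 * PI.
Proof. pose proof PI_RGT_0; lra. Qed.

Lemma E_lip K n : forall f g eps, Lip K f -> Lip K g -> (forall p, Rabs (f p - g p) <= eps) ->
  Rabs (expect n f - expect n g) <= eps.
Proof.
  induction n; intros f g eps Hf Hg H; simpl. apply H.
  set (F := fun x => expect n (fun p => f (upd p (S n) x))).
  set (G := fun x => expect n (fun p => g (upd p (S n) x))).
  assert (HFl : forall (h : (nat -> R) -> R), Lip K h -> exists L, 0 <= L /\
     forall a b, Rabs (expect n (fun p => h (upd p (S n) a)) - expect n (fun p => h (upd p (S n) b))) <= L * Rabs (a - b)).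
  { intros h Hh. destruct Hh as [L [HL Hh']]. exists L; split; auto. intros a b.
    apply IHn; try (apply Lip_upd; exists L; auto).
    intros p. eapply Rle_trans; [apply Hh'|]. apply Rmult_le_compat_l; auto. apply dst_upd2. }
  assert (HiF : ex_RInt F 0 (2*PI)).
  { destruct (HFl f Hf) as [L [HL HL']]. apply (@ex_RInt_continuous R_CompleteNormedModule). intros; eapply lip1_cont; eauto. }
  assert (HiG : ex_RInt G 0 (2*PI)).
  { destruct (HFl g Hg) as [L [HL HL']]. apply (@ex_RInt_continuous R_CompleteNormedModule). intros; eapply lip1_cont; eauto. }
  fold F G.
  rewrite <- Rmult_minus_distr_l.
  assert (E : RInt F 0 (2*PI) - RInt G 0 (2*PI) = RInt (fun x => F x - G x) 0 (2*PI)).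
  { symmetry. apply (RInt_minus F G); auto. }
  rewrite E, Rabs_mult.
  assert (B : Rabs (RInt (fun x => F x - G x) 0 (2*PI)) <= (2*PI - 0) * eps).
  { apply abs_RInt_le_const. pose proof PI2_pos; lra. apply (ex_RInt_minus F G); auto.
    intros t _. unfold F, G. apply IHn; try apply Lip_upd; auto. }
  pose proof PI2_pos.
  rewrite Rabs_right by (apply Rle_ge; left; apply Rinv_0_lt_compat; lra).
  apply Rle_trans with (/ (2*PI) * ((2*PI - 0) * eps)).
  apply Rmult_le_compat_l; [left; apply Rinv_0_lt_compat; lra| auto].
  right; field; lra.
Qed.

Lemma E_upd_lip K n f : Lip K f -> exists L, 0 <= L /\
  forall a b, Rabs (expect n (fun p => f (upd p (S n) a)) - expect n (fun p => f (upd p (S n) b))) <= L * Rabs (a - b).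
Proof.
  intros Hh. pose proof Hh as [L [HL Hh']]. exists L; split; auto. intros a b.
  apply (E_lip K); try (apply Lip_upd; auto).
  intros p. eapply Rle_trans; [apply Hh'|]. apply Rmult_le_compat_l; auto. apply dst_upd2.
Qed.

Lemma E_nonneg K n : forall f, Lip K f -> (forall p, 0 <= f p) -> 0 <= expect n f.
Proof.
  induction n; intros f Hf H; simpl. apply H.
  destruct (E_upd_lip K n f Hf) as [L [HL HL']].
  apply Rmult_le_pos. left; apply Rinv_0_lt_compat; apply PI2_pos.
  apply RInt_ge_0. pose proof PI2_pos; lra.
  apply (@ex_RInt_continuous R_CompleteNormedModule). intros; eapply lip1_cont; eauto.
  intros x _. apply IHn. apply Lip_upd; auto. intros; apply H.
Qed.

Lemma RInt_zero_pt (F : R -> R) L a b :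
  0 <= L -> (forall x y, Rabs (F x - F y) <= L * Rabs (x - y)) -> (forall x, 0 <= F x) ->
  a < b -> RInt F a b = 0 -> forall x, a <= x <= b -> F x = 0.
Proof.
  intros HL HF Hpos Hab Hint x0 Hx0.
  destruct (Hpos x0) as [Hc|Hc]; [exfalso|auto].
  set (c := F x0) in *.
  set (r := c / (2 * (L + 1))).
  assert (Hr : 0 < r) by (unfold r; apply Rdiv_lt_0_compat; lra).
  set (a' := Rmax a (x0 - r)). set (b' := Rmin b (x0 + r)).
  assert (Ha' : a <= a' <= x0) by (unfold a'; split; [apply Rmax_l| apply Rmax_lub; lra]).
  assert (Hb' : x0 <= b' <= b) by (unfold b'; split; [apply Rmin_glb; lra | apply Rmin_l]).
  assert (Hab' : a' < b').
  { unfold a', b'. unfold Rmax, Rmin. repeat destruct Rle_dec; lra. }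
  assert (Hcont : forall z, continuous F z) by (intros; eapply lip1_cont; eauto).
  assert (Hex : forall u v, ex_RInt F u v) by (intros; apply (@ex_RInt_continuous R_CompleteNormedModule); auto).
  assert (Hmid : forall x, a' <= x <= b' -> c / 2 <= F x).
  { intros x Hx. assert (Rabs (x - x0) <= r).
    { unfold a', b', Rmax, Rmin in Hx. apply Rabs_le. repeat destruct Rle_dec; lra. }
    pose proof (HF x0 x) as H0. rewrite (Rabs_minus_sym x0 x) in H0.
    assert (L * Rabs (x - x0) <= L * r) by (apply Rmult_le_compat_l; auto).
    assert (L * r <= c / 2).
    { unfold r. apply Rle_trans with ((L+1) * (c / (2 * (L+1)))).
      apply Rmult_le_compat_r; [left; apply Rdiv_lt_0_compat; lra| lra]. right; field; lra. }
    assert (F x0 - F x <= L * Rabs (x - x0)) by (eapply Rle_trans; [apply Rle_abs|apply H0]). fold c in H3. lra. }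
  assert (I1 : 0 <= RInt F a a') by (apply RInt_ge_0; auto; lra).
  assert (I3 : 0 <= RInt F b' b) by (apply RInt_ge_0; auto; lra).
  assert (I2 : (b' - a') * (c / 2) <= RInt F a' b').
  { rewrite <- (RInt_const a' b' (c/2)) at 1. apply RInt_le; auto; try lra.
    apply ex_RInt_const. intros; apply Hmid; lra. }
  assert (E : RInt F a b = RInt F a a' + (RInt F a' b' + RInt F b' b)).
  { rewrite <- (RInt_Chasles F a a' b) by auto. rewrite <- (RInt_Chasles F a' b' b) by auto. reflexivity. }
  assert (0 < (b' - a') * (c / 2)) by (apply Rmult_lt_0_compat; lra).
  lra.
Qed.

Lemma E_zero K n : forall f, Lip K f -> (forall p, 0 <= f p) -> expect n f = 0 ->
  forall p, (forall k, (1 <= k <= n)%nat -> 0 <= p k <= 2 * PI) ->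
  (forall k, (k = 0 \/ n < k)%nat -> p k = 0) -> f p = 0.
Proof.
  induction n; intros f Hf Hpos He p Hbox Hout; simpl in He.
  - replace p with (fun _ : nat => 0) by (apply functional_extensionality; intros k; rewrite Hout; auto; lia). auto.
  - destruct (E_upd_lip K n f Hf) as [L [HL HL']].
    pose proof PI2_pos.
    assert (HI : RInt (fun x => expect n (fun q => f (upd q (S n) x))) 0 (2 * PI) = 0).
    { apply Rmult_integral in He. destruct He as [He|He]; auto.
      exfalso. assert (0 < / (2*PI)) by (apply Rinv_0_lt_compat; lra). lra. }
    assert (HF := RInt_zero_pt _ L 0 (2*PI) HL HL' ltac:(intros; apply E_nonneg with K; [apply Lip_upd; auto| auto]) H HI (p (S n)) (Hbox (S n) ltac:(lia))).
    assert (Hq := IHn (fun q => f (upd q (S n) (p (S n)))) (Lip_upd _ _ _ _ Hf) ltac:(intros; apply Hpos) HF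
                  (upd p (S n) 0)).
    simpl in Hq.
    replace (upd (upd p (S n) 0) (S n) (p (S n))) with p in Hq.
    apply Hq.
    + intros k Hk. unfold upd. destruct (Nat.eqb_spec k (S n)); [lra|]. apply Hbox; lia.
    + intros k Hk. unfold upd. destruct (Nat.eqb_spec k (S n)); auto. apply Hout; lia.
    + apply functional_extensionality; intros k. unfold upd.
      destruct (Nat.eqb_spec k (S n)); subst; auto.
Qed.

Definition LB (K : nat) (f : (nat -> R) -> R) :=
  exists M L, 0 <= L /\ (forall p, Rabs (f p) <= M) /\ (forall p q, Rabs (f p - f q) <= L * dst K p q).

Lemma LB_Lip K f : LB K f -> Lip K f.
Proof. intros [M [L [HL [_ H]]]]. exists L; auto. Qed.

Lemma LB_const K c : LB K (fun _ => c).
Proof. exists (Rabs c), 0. repeat split; try lra. intros; apply Rle_refl.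
  intros. replace (c - c) with 0 by ring. rewrite Rabs_R0, Rmult_0_l. lra. Qed.

Lemma LB_plus K f g : LB K f -> LB K g -> LB K (fun p => f p + g p).
Proof.
  intros [M1 [L1 [HL1 [B1 H1]]]] [M2 [L2 [HL2 [B2 H2]]]].
  exists (M1 + M2), (L1 + L2). split; [lra|split].
  - intros p. eapply Rle_trans; [apply Rabs_triang|]. specialize (B1 p); specialize (B2 p); lra.
  - intros p q. replace (f p + g p - (f q + g q)) with ((f p - f q) + (g p - g q)) by ring.
    eapply Rle_trans; [apply Rabs_triang|]. specialize (H1 p q); specialize (H2 p q); lra.
Qed.

Lemma LB_opp K f : LB K f -> LB K (fun p => - f p).
Proof.
  intros [M [L [HL [B H]]]]. exists M, L. split; auto. split.
  intros; rewrite Rabs_Ropp; auto. intros p q. replace (- f p - - f q) with (- (f p - f q)) by ring.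
  rewrite Rabs_Ropp; auto.
Qed.

Lemma LB_mult K f g : LB K f -> LB K g -> LB K (fun p => f p * g p).
Proof.
  intros [M1 [L1 [HL1 [B1 H1]]]] [M2 [L2 [HL2 [B2 H2]]]].
  assert (HM1 : 0 <= M1) by (eapply Rle_trans; [apply Rabs_pos|apply (B1 (fun _ => 0))]).
  assert (HM2 : 0 <= M2) by (eapply Rle_trans; [apply Rabs_pos|apply (B2 (fun _ => 0))]).
  exists (M1 * M2), (M1 * L2 + M2 * L1). split; [nra|split].
  - intros p. rewrite Rabs_mult. apply Rmult_le_compat; auto using Rabs_pos.
  - intros p q. replace (f p * g p - f q * g q) with (f p * (g p - g q) + g q * (f p - f q)) by ring.
    eapply Rle_trans; [apply Rabs_triang|]. rewrite !Rabs_mult.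
    pose proof (dst_nonneg K p q).
    assert (Rabs (f p) * Rabs (g p - g q) <= M1 * (L2 * dst K p q)).
    { apply Rmult_le_compat; auto using Rabs_pos. }
    assert (Rabs (g q) * Rabs (f p - f q) <= M2 * (L1 * dst K p q)).
    { apply Rmult_le_compat; auto using Rabs_pos. }
    nra.
Qed.

Lemma cos_lip a b : Rabs (cos a - cos b) <= Rabs (a - b).
Proof.
  destruct (MVT_abs cos (fun x => - sin x) b a) as [c [Hc _]].
  { intros; apply derivable_pt_lim_cos. }
  rewrite Hc. rewrite Rabs_Ropp. pose proof (SIN_bound c).
  assert (Rabs (sin c) <= 1) by (apply Rabs_le; lra).
  pose proof (Rabs_pos (a - b)). nra.
Qed.

Lemma sin_lip a b : Rabs (sin a - sin b) <= Rabs (a - b).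
Proof.
  destruct (MVT_abs sin cos b a) as [c [Hc _]].
  { intros; apply derivable_pt_lim_sin. }
  rewrite Hc. pose proof (COS_bound c).
  assert (Rabs (cos c) <= 1) by (apply Rabs_le; lra).
  pose proof (Rabs_pos (a - b)). nra.
Qed.

Lemma LB_cos K k : (1 <= k <= K)%nat -> LB K (fun p => cos (p k)).
Proof.
  intros Hk. exists 1, 1. split; [lra|split].
  intros; apply Rabs_le; apply COS_bound.
  intros. rewrite Rmult_1_l. eapply Rle_trans; [apply cos_lip|]. apply dst_coord; auto.
Qed.

Lemma LB_sin K k : (1 <= k <= K)%nat -> LB K (fun p => sin (p k)).
Proof.
  intros Hk. exists 1, 1. split; [lra|split].
  intros; apply Rabs_le; apply SIN_bound.
  intros. rewrite Rmult_1_l. eapply Rle_trans; [apply sin_lip|]. apply dst_coord; auto.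
Qed.

Lemma sum_closed {G : AbelianMonoid} (Q : ((nat -> R) -> G) -> Prop) :
  Q (fun _ => zero) -> (forall f g, Q f -> Q g -> Q (fun p => plus (f p) (g p))) ->
  forall a m n, (forall k, (m <= k <= n)%nat -> Q (a k)) -> Q (fun p => sum_n_m (fun k => a k p) m n).
Proof.
  intros H0 Hp a m n. induction n; intros Ha.
  - destruct m.
    + replace (fun p => sum_n_m (fun k => a k p) 0 0) with (a 0%nat)
        by (apply functional_extensionality; intros; rewrite sum_n_n; auto).
      apply Ha; lia.
    + replace (fun p => sum_n_m (fun k => a k p) (S m) 0) with (fun _ : nat -> R => @zero G)
        by (apply functional_extensionality; intros; rewrite sum_n_m_zero; auto; lia). auto.
  - destruct (Nat.leb_spec m (S n)).
    + destruct (Nat.eq_dec m (S n)).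
      * subst m. replace (fun p => sum_n_m (fun k => a k p) (S n) (S n)) with (a (S n))
          by (apply functional_extensionality; intros; rewrite sum_n_n; auto).
        apply Ha; lia.
      * replace (fun p => sum_n_m (fun k => a k p) m (S n)) with
          (fun p => plus (sum_n_m (fun k => a k p) m n) (a (S n) p))
          by (apply functional_extensionality; intros; rewrite sum_n_Sm; auto; lia).
        apply Hp. apply IHn; intros; apply Ha; lia. apply Ha; lia.
    + replace (fun p => sum_n_m (fun k => a k p) m (S n)) with (fun _ : nat -> R => @zero G)
        by (apply functional_extensionality; intros; rewrite sum_n_m_zero; auto; lia). auto.
Qed.

Lemma LB_sum K a m n : (forall k, (m <= k <= n)%nat -> LB K (a k)) ->
  LB K (fun p => rsum (fun k => a k p) m n).
Proof.
  apply (@sum_closed R_AbelianMonoid (LB K)). apply LB_const. intros; apply LB_plus; auto.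
Qed.

Definition CLB K (g : (nat -> R) -> C) := LB K (fun p => fst (g p)) /\ LB K (fun p => snd (g p)).

Lemma CLB_const K c : CLB K (fun _ => c).
Proof. split; apply LB_const. Qed.

Lemma CLB_plus K f g : CLB K f -> CLB K g -> CLB K (fun p => Cplus (f p) (g p)).
Proof. intros [] []; split; simpl; apply LB_plus; auto. Qed.

Lemma CLB_mult K f g : CLB K f -> CLB K g -> CLB K (fun p => Cmult (f p) (g p)).
Proof.
  intros [] []; split; simpl.
  - apply (LB_plus K (fun p => fst (f p) * fst (g p)) (fun p => - (snd (f p) * snd (g p))));
    [|apply LB_opp]; apply LB_mult; auto.
  - apply LB_plus; apply LB_mult; auto.
Qed.

Lemma CLB_conj K f : CLB K f -> CLB K (fun p => Cconj (f p)).
Proof. intros []; split; simpl; auto. apply LB_opp; auto. Qed.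

Lemma CLB_minus K f g : CLB K f -> CLB K g -> CLB K (fun p => Cminus (f p) (g p)).
Proof. intros [] []; split; simpl; apply LB_plus; auto; apply LB_opp; auto. Qed.

Lemma CLB_pow K f n : CLB K f -> CLB K (fun p => pow_n (f p) n).
Proof.
  intros H. induction n; simpl. apply CLB_const. apply (CLB_mult K f (fun p => pow_n (f p) n)); auto.
Qed.

Lemma CLB_csum K a m n : (forall k, (m <= k <= n)%nat -> CLB K (a k)) ->
  CLB K (fun p => csum (fun k => a k p) m n).
Proof.
  apply (@sum_closed C_AbelianMonoid (CLB K)). apply CLB_const. intros; apply CLB_plus; auto.
Qed.

Lemma div2_even q : ((2 * q) / 2 = q)%nat.
Proof. replace (2 * q)%nat with (q * 2)%nat by lia. apply Nat.div_mul; lia. Qed.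
Lemma div2_odd q : ((2 * q + 1) / 2 = q)%nat.
Proof. replace (2 * q + 1)%nat with (1 + q * 2)%nat by lia. rewrite Nat.div_add by lia. reflexivity. Qed.

Lemma kap_range K j : (1 <= j <= 2 * K)%nat -> (1 <= (j + 1) / 2 <= K)%nat /\ (Nat.odd j = false -> (j / 2 = (j + 1) / 2)%nat).
Proof.
  intros Hj. destruct (Nat.Even_or_Odd j) as [[q Hq]|[q Hq]]; subst.
  - rewrite div2_odd, div2_even. lia.
  - replace (2 * q + 1 + 1)%nat with (2 * (q + 1))%nat by lia. rewrite div2_even, div2_odd. split; [lia|]. intros H.
    rewrite (Nat.add_comm (2 * q) 1), Nat.odd_add_mul_2 in H. discriminate.
Qed.

Lemma CLB_lam K j : (1 <= j <= 2 * K)%nat -> CLB K (fun p => lam p j).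
Proof.
  intros Hj. destruct (kap_range K j Hj) as [Hk Hev]. unfold lam.
  destruct (Nat.odd j) eqn:Ho.
  - split; simpl; [apply LB_cos|apply LB_sin]; auto.
  - rewrite Hev by auto. apply CLB_conj. split; simpl; [apply LB_cos|apply LB_sin]; auto.
Qed.

Lemma CLB_e K t j : (1 <= j <= 2 * K)%nat -> CLB K (fun p => e p t j).
Proof. intros; unfold e; apply CLB_pow, CLB_lam; auto. Qed.

Lemma Cmod_sq z : Cmod z ^ 2 = fst z * fst z + snd z * snd z.
Proof.
  unfold Cmod. rewrite pow2_sqrt. ring. pose proof (pow2_ge_0 (fst z)); pose proof (pow2_ge_0 (snd z)); lra.
Qed.

Lemma LB_sqerr K H A B P T : LB K (fun p => sqerr (2 * K) H A B P p T).
Proof.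
  unfold sqerr. apply LB_sum. intros i Hi.
  assert (Hc : CLB K (fun p => Cminus (model (2 * K) H A B P p T i) (e p (T + 1) i))).
  { apply CLB_minus; [|apply CLB_e; lia].
    unfold model. apply CLB_csum; intros h _. apply CLB_csum; intros t _.
    apply CLB_mult; [apply CLB_mult|].
    - apply CLB_const.
    - unfold cinner. apply CLB_csum; intros j Hj. apply CLB_mult. apply CLB_e; lia.
      apply CLB_conj. apply CLB_mult. apply CLB_const. apply CLB_e; lia.
    - apply CLB_mult. apply CLB_const. apply CLB_e; lia. }
  destruct Hc as [H1 H2].
  replace (fun p => Cmod (Cminus (model (2 * K) H A B P p T i) (e p (T + 1) i)) ^ 2) with
    (fun p => fst (Cminus (model (2 * K) H A B P p T i) (e p (T + 1) i)) * fst (Cminus (model (2 * K) H A B P p T i) (e p (T + 1) i))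
            + snd (Cminus (model (2 * K) H A B P p T i) (e p (T + 1) i)) * snd (Cminus (model (2 * K) H A B P p T i) (e p (T + 1) i))).
  apply LB_plus; apply LB_mult; auto.
  apply functional_extensionality; intros; rewrite Cmod_sq; auto.
Qed.

Lemma rsum_pos a m n : (forall k, (m <= k <= n)%nat -> 0 <= a k) ->
  0 <= rsum a m n /\ forall j, (m <= j <= n)%nat -> a j <= rsum a m n.
Proof.
  unfold rsum. induction n; intros Ha.
  - destruct m.
    + rewrite sum_n_n. split. apply Ha; lia. intros j Hj. replace j with 0%nat by lia. lra.
    + rewrite sum_n_m_zero by lia. split. unfold zero; simpl; lra. intros; lia.
  - destruct (Nat.leb_spec m (S n)).
    + destruct (Nat.eq_dec m (S n)).
      * subst m. rewrite sum_n_n. split. apply Ha; lia. intros j Hj. replace j with (S n) by lia. lra.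
      * rewrite sum_n_Sm by lia. destruct IHn as [H1 H2]. intros; apply Ha; lia.
        pose proof (Ha (S n) ltac:(lia)). change plus with Rplus. simpl. split. lra.
        intros j Hj. destruct (Nat.eq_dec j (S n)). subst; lra. specialize (H2 j ltac:(lia)). lra.
    + rewrite sum_n_m_zero by lia. split. unfold zero; simpl; lra. intros; lia.
Qed.

Lemma sqerr_nonneg d H A B P p T : 0 <= sqerr d H A B P p T.
Proof. apply rsum_pos. intros; apply pow2_ge_0. Qed.

Lemma csum_ext f g m n : (forall k, (m <= k <= n)%nat -> f k = g k) -> csum f m n = csum g m n.
Proof. apply sum_n_m_ext_loc. Qed.

Lemma csum_zero f m n : (forall k, (m <= k <= n)%nat -> f k = RtoC 0) -> csum f m n = RtoC 0.
Proof. intros H. rewrite (csum_ext f (fun _ => zero)) by auto. apply (@sum_n_m_const_zero C_AbelianMonoid). Qed.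

Lemma csum_plus f g m n : csum (fun k => Cplus (f k) (g k)) m n = Cplus (csum f m n) (csum g m n).
Proof. apply (@sum_n_m_plus C_AbelianMonoid). Qed.

Lemma csum_mult_l c f m n : csum (fun k => Cmult c (f k)) m n = Cmult c (csum f m n).
Proof. apply (@sum_n_m_mult_l C_Ring). Qed.

Lemma csum_mult_r c f m n : csum (fun k => Cmult (f k) c) m n = Cmult (csum f m n) c.
Proof. rewrite (csum_ext _ (fun k => Cmult c (f k))) by (intros; ring). rewrite csum_mult_l. ring. Qed.

Lemma csum_Sn f m n : (m <= S n)%nat -> csum f m (S n) = Cplus (csum f m n) (f (S n)).
Proof. intros; unfold csum; rewrite sum_n_Sm; auto. Qed.

Lemma csum_swap (f : nat -> nat -> C) m1 n1 m2 n2 :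
  csum (fun a => csum (fun b => f a b) m2 n2) m1 n1 = csum (fun b => csum (fun a => f a b) m1 n1) m2 n2.
Proof.
  induction n1.
  - destruct m1.
    + unfold csum. rewrite sum_n_n. apply sum_n_m_ext; intros; rewrite sum_n_n; auto.
    + unfold csum. rewrite sum_n_m_zero by lia. symmetry. rewrite <- (sum_n_m_const_zero m2 n2).
      apply sum_n_m_ext; intros; rewrite sum_n_m_zero; auto; lia.
  - destruct (Nat.leb_spec m1 (S n1)).
    + destruct (Nat.eq_dec m1 (S n1)).
      * subst m1. unfold csum. rewrite sum_n_n. apply sum_n_m_ext; intros; rewrite sum_n_n; auto.
      * rewrite csum_Sn by lia. rewrite IHn1. rewrite <- csum_plus. apply csum_ext; intros.
        rewrite csum_Sn by lia. auto.
    + unfold csum. rewrite sum_n_m_zero by lia. symmetry. rewrite <- (sum_n_m_const_zero m2 n2).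
      apply sum_n_m_ext; intros; rewrite sum_n_m_zero; auto; lia.
Qed.

Lemma RtoC_rsum f m n : RtoC (rsum f m n) = csum (fun k => RtoC (f k)) m n.
Proof.
  unfold rsum, csum. induction n.
  - destruct m. rewrite !sum_n_n; auto. rewrite !sum_n_m_zero by lia. reflexivity.
  - destruct (Nat.leb_spec m (S n)).
    + destruct (Nat.eq_dec m (S n)). subst m. rewrite !sum_n_n; auto.
      rewrite !sum_n_Sm by lia. rewrite <- IHn. apply RtoC_plus.
    + rewrite !sum_n_m_zero by lia. reflexivity.
Qed.

Lemma csum_single f m n j0 : (m <= j0 <= n)%nat -> (forall j, (m <= j <= n)%nat -> j <> j0 -> f j = RtoC 0) ->
  csum f m n = f j0.
Proof.
  induction n; intros Hj H.
  - replace m with 0%nat by lia. replace j0 with 0%nat by lia. apply sum_n_n.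
  - destruct (Nat.eq_dec m (S n)).
    + subst m. replace j0 with (S n) by lia. apply sum_n_n.
    + rewrite csum_Sn by lia. destruct (Nat.eq_dec j0 (S n)).
      * subst j0. rewrite csum_zero. ring. intros; apply H; lia.
      * rewrite IHn; [| lia | intros; apply H; lia]. rewrite (H (S n)) by lia. ring.
Qed.

Definition cis (y : R) : C := (cos y, sin y).

Lemma cis_mult a b : Cmult (cis a) (cis b) = cis (a + b).
Proof. unfold cis, Cmult; simpl. rewrite cos_plus, sin_plus. f_equal; ring. Qed.

Lemma cis_conj a : Cconj (cis a) = cis (- a).
Proof. unfold cis, Cconj; simpl. rewrite cos_neg, sin_neg. reflexivity. Qed.

Lemma cis_0 : cis 0 = RtoC 1.
Proof. unfold cis, RtoC. rewrite cos_0, sin_0. reflexivity. Qed.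

Lemma cis_pow a n : pow_n (cis a) n = cis (INR n * a).
Proof.
  induction n. simpl. rewrite Rmult_0_l, cis_0. reflexivity.
  change (pow_n (cis a) (S n)) with (Cmult (cis a) (pow_n (cis a) n)). rewrite IHn, cis_mult.
  f_equal. rewrite S_INR. ring.
Qed.

Lemma cis_ext a b : a = b -> cis a = cis b.
Proof. intros; subst; auto. Qed.

Definition sg (j : nat) : R := if Nat.odd j then 1 else -1.
Definition sgZ (j : nat) : Z := if Nat.odd j then 1%Z else (-1)%Z.
Definition kap (j : nat) : nat := ((j + 1) / 2)%nat.

Lemma sg_sgZ j : sg j = IZR (sgZ j).
Proof. unfold sg, sgZ. destruct (Nat.odd j); reflexivity. Qed.

Lemma lam_cis p j : lam p j = cis (sg j * p (kap j)).
Proof.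
  unfold lam, sg, kap. destruct (Nat.Even_or_Odd j) as [[q Hq]|[q Hq]]; subst.
  - assert (Nat.odd (2 * q) = false) by (rewrite <- Nat.negb_even, Nat.even_mul; reflexivity).
    rewrite H. rewrite div2_odd, div2_even. unfold mu. change (cos (p q), sin (p q)) with (cis (p q)).
    rewrite cis_conj. f_equal. ring.
  - assert (Nat.odd (2 * q + 1) = true) by (rewrite Nat.add_comm, Nat.odd_add_mul_2; reflexivity).
    rewrite H. replace (2 * q + 1 + 1)%nat with (2 * (q + 1))%nat by lia. rewrite div2_even.
    unfold mu, cis. rewrite Rmult_1_l. reflexivity.
Qed.

Lemma Cconj_RtoC a : Cconj (RtoC a) = RtoC a.
Proof. unfold Cconj, RtoC; simpl. f_equal; ring. Qed.

Definition X (p : nat -> R) (T r t j : nat) : C :=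
  Cmult (Cmult (pow_n (lam p j) (t - 1)) (Cconj (pow_n (lam p j) (T - 1 - 1)))) (pow_n (lam p r) (t - 1)).

Lemma model_eq d H A B P p T r :
  model d H A B P p T r =
  csum (fun t => csum (fun j => Cmult (RtoC (P (T - 1)%nat t * Cmat H A B r j)) (X p T r t j)) 1 d) 1 T.
Proof.
  unfold model, cinner, e.
  rewrite (csum_ext _ (fun h => csum (fun t => csum (fun j =>
     Cmult (RtoC (P (T - 1)%nat t * (B h r * A h j))) (X p T r t j)) 1 d) 1 T)).
  2:{ intros h _. apply csum_ext; intros t _.
      rewrite <- csum_mult_l, <- csum_mult_r. apply csum_ext; intros j _.
      unfold X. rewrite Cmult_conj, Cconj_RtoC, !RtoC_mult. ring. }
  rewrite csum_swap. apply csum_ext; intros t _. rewrite csum_swap. apply csum_ext; intros j _.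
  rewrite csum_mult_r. f_equal. unfold Cmat. rewrite RtoC_mult, RtoC_rsum, <- csum_mult_l.
  apply csum_ext; intros; rewrite RtoC_mult; reflexivity.
Qed.

Lemma X_cis p T r t j : (1 <= t)%nat -> (2 <= T)%nat ->
  X p T r t j = cis ((INR t - 1) * (sg j * p (kap j)) - (INR T - 2) * (sg j * p (kap j)) + (INR t - 1) * (sg r * p (kap r))).
Proof.
  intros Ht HT. unfold X. rewrite !lam_cis, !cis_pow, cis_conj, !cis_mult. apply cis_ext.
  rewrite !minus_INR by lia. simpl. ring.
Qed.

Definition xs (N s : nat) : R := 2 * PI * INR s / INR N.

Definition avg (N : nat) (m : Z) (G : R -> C) : C :=
  Cmult (RtoC (/ INR N)) (csum (fun s => Cmult (G (xs N s)) (cis (- IZR m * xs N s))) 0 (N - 1)).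

Lemma xs_range N s : (0 < N)%nat -> (s <= N - 1)%nat -> 0 <= xs N s <= 2 * PI.
Proof.
  intros HN Hs. unfold xs. pose proof PI_RGT_0.
  assert (0 < INR N) by (apply lt_0_INR; lia).
  assert (INR s <= INR N) by (apply le_INR; lia). pose proof (pos_INR s).
  split. apply Rmult_le_pos; [nra| left; apply Rinv_0_lt_compat; auto].
  apply Rle_trans with (2 * PI * INR N / INR N). unfold Rdiv.
  apply Rmult_le_compat_r; [left; apply Rinv_0_lt_compat; auto| nra]. right; field; lra.
Qed.

Lemma avg_ext N m G G' : (0 < N)%nat -> (forall x, 0 <= x <= 2 * PI -> G x = G' x) -> avg N m G = avg N m G'.
Proof.
  intros HN H. unfold avg. f_equal. apply csum_ext; intros s Hs. rewrite H; auto. apply xs_range; lia.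
Qed.

Lemma avg_sum N m (F : nat -> R -> C) m1 n1 :
  avg N m (fun x => csum (fun a => F a x) m1 n1) = csum (fun a => avg N m (F a)) m1 n1.
Proof.
  unfold avg. rewrite csum_mult_l. f_equal.
  rewrite (csum_ext _ (fun s => csum (fun a => Cmult (F a (xs N s)) (cis (- IZR m * xs N s))) m1 n1)).
  apply csum_swap. intros; rewrite csum_mult_r; auto.
Qed.

Lemma avg_scal N m c G : avg N m (fun x => Cmult c (G x)) = Cmult c (avg N m G).
Proof.
  unfold avg. rewrite (csum_ext _ (fun s => Cmult c (Cmult (G (xs N s)) (cis (- IZR m * xs N s))))).
  rewrite csum_mult_l. ring. intros; ring.
Qed.

Lemma cis_2piZ q : cis (IZR q * (2 * PI)) = RtoC 1.
Proof.
  assert (Hs : sin (IZR q * PI) = 0) by (apply sin_eq_0_1; exists q; auto).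
  replace (IZR q * (2 * PI)) with (2 * (IZR q * PI)) by ring.
  unfold cis, RtoC. rewrite cos_2a_sin, sin_2a, Hs. f_equal; ring.
Qed.

Lemma geom (w : C) n : Cmult (Cminus w (RtoC 1)) (csum (fun s => pow_n w s) 0 n) = Cminus (pow_n w (S n)) (RtoC 1).
Proof.
  induction n.
  - unfold csum. rewrite sum_n_n. simpl. change (@one C_Ring) with (RtoC 1). change (@mult C_Ring w (RtoC 1)) with (Cmult w (RtoC 1)). ring.
  - rewrite csum_Sn by lia. change (pow_n w (S (S n))) with (Cmult w (pow_n w (S n))).
    change (pow_n w (S n)) with (Cmult w (pow_n w n)) in *.
    replace (Cmult (Cminus w 1) (Cplus (csum (fun s : nat => pow_n w s) 0 n) (Cmult w (pow_n w n))))
      with (Cplus (Cmult (Cminus w 1) (csum (fun s : nat => pow_n w s) 0 n)) (Cmult (Cminus w 1) (Cmult w (pow_n w n)))) by ring.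
    rewrite IHn. ring.
Qed.

Lemma csum_one n : csum (fun _ => RtoC 1) 0 n = RtoC (INR (S n)).
Proof.
  induction n. unfold csum; rewrite sum_n_n. simpl; auto.
  rewrite csum_Sn by lia. rewrite IHn. rewrite (S_INR (S n)). rewrite RtoC_plus. reflexivity.
Qed.

Lemma cis_ne1 q N : (0 < N)%nat -> q <> 0%Z -> (Z.abs q < Z.of_nat N)%Z ->
  cis (IZR q * (2 * PI) / INR N) <> RtoC 1.
Proof.
  intros HN Hq HqN Hc. pose proof PI_RGT_0.
  assert (HNr : 0 < INR N) by (apply lt_0_INR; lia).
  assert (Hsin : sin (IZR q * (2 * PI) / INR N) = 0) by (apply (f_equal snd) in Hc; simpl in Hc; auto).
  assert (Hcos : cos (IZR q * (2 * PI) / INR N) = 1) by (apply (f_equal fst) in Hc; simpl in Hc; auto).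
  destruct (sin_eq_0_0 _ Hsin) as [k Hk].
  assert (E : IZR (2 * q) = IZR (k * Z.of_nat N)).
  { rewrite mult_IZR, mult_IZR, <- INR_IZR_INZ.
    apply Rmult_eq_reg_r with (PI / INR N). 2:{ apply Rgt_not_eq. apply Rdiv_lt_0_compat; lra. }
    replace (IZR 2 * IZR q * (PI / INR N)) with (IZR q * (2 * PI) / INR N) by (simpl; field; lra).
    rewrite Hk. field; lra. }
  apply eq_IZR in E.
  assert (k = 1%Z \/ k = (-1)%Z) by nia.
  rewrite Hk in Hcos. destruct H0; subst; simpl in Hcos.
  - rewrite Rmult_1_l, cos_PI in Hcos. lra.
  - replace (-1 * PI) with (- PI) in Hcos by ring. rewrite cos_neg, cos_PI in Hcos. lra.
Qed.

Lemma avg_cis N m n a : (0 < N)%nat -> (Z.abs (n - m) < Z.of_nat N)%Z ->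
  avg N m (fun x => cis (a + IZR n * x)) = if Z.eqb n m then cis a else RtoC 0.
Proof.
  intros HN Hb. unfold avg. pose proof PI_RGT_0.
  assert (HNr : 0 < INR N) by (apply lt_0_INR; lia).
  rewrite (csum_ext _ (fun s => Cmult (cis a) (pow_n (cis (IZR (n - m) * (2 * PI) / INR N)) s))).
  2:{ intros s _. rewrite cis_pow, cis_mult, cis_mult. apply cis_ext. unfold xs. rewrite minus_IZR. field. lra. }
  rewrite csum_mult_l. destruct (Z.eqb_spec n m).
  - subst. rewrite Z.sub_diag. rewrite (csum_ext _ (fun _ => RtoC 1)).
    rewrite csum_one. replace (S (N - 1)) with N by lia.
    transitivity (Cmult (Cmult (RtoC (/ INR N)) (RtoC (INR N))) (cis a)). ring.
    rewrite <- RtoC_mult, Rinv_l by lra. ring.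
    intros. rewrite Rmult_0_l, Rdiv_0_l, cis_pow, Rmult_0_r, cis_0. reflexivity.
  - set (w := cis (IZR (n - m) * (2 * PI) / INR N)).
    assert (Hw : w <> RtoC 1) by (apply cis_ne1; auto; lia).
    assert (HwN : pow_n w N = RtoC 1).
    { unfold w. rewrite cis_pow. rewrite <- (cis_2piZ (n - m)). apply cis_ext. field. lra. }
    assert (G := geom w (N - 1)). replace (S (N - 1)) with N in G by lia. rewrite HwN in G.
    assert (Hw1 : Cminus w (RtoC 1) <> RtoC 0).
    { intros Hc. apply Hw. replace w with (Cplus (Cminus w (RtoC 1)) (RtoC 1)) by ring. rewrite Hc. ring. }
    assert (csum (fun s => pow_n w s) 0 (N - 1) = RtoC 0).
    { replace (csum (fun s => pow_n w s) 0 (N - 1)) with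
        (Cmult (Cinv (Cminus w (RtoC 1))) (Cmult (Cminus w (RtoC 1)) (csum (fun s => pow_n w s) 0 (N - 1)))).
      rewrite G. ring. rewrite Cmult_assoc, Cinv_l by auto. ring. }
    change (csum (pow_n w) 0 (N - 1)) with (csum (fun s => pow_n w s) 0 (N - 1)). rewrite H0. ring.
Qed.

Lemma odd_2q1 q : Nat.odd (2 * q + 1) = true.
Proof. rewrite Nat.add_comm, Nat.odd_add_mul_2; reflexivity. Qed.
Lemma odd_2q q : Nat.odd (2 * q) = false.
Proof. rewrite <- Nat.negb_even, Nat.even_mul; reflexivity. Qed.
Lemma kap_odd q : kap (2 * q + 1) = S q.
Proof. unfold kap. replace (2 * q + 1 + 1)%nat with (2 * S q)%nat by lia. apply div2_even. Qed.
Lemma kap_even q : kap (2 * q) = q.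
Proof. unfold kap. apply div2_odd. Qed.
Lemma sgZ_odd q : sgZ (2 * q + 1) = 1%Z.
Proof. unfold sgZ; rewrite odd_2q1; auto. Qed.
Lemma sgZ_even q : sgZ (2 * q) = (-1)%Z.
Proof. unfold sgZ; rewrite odd_2q; auto. Qed.
Lemma sgZ_cases j : sgZ j = 1%Z \/ sgZ j = (-1)%Z.
Proof. unfold sgZ; destruct (Nat.odd j); auto. Qed.

Definition partner (r : nat) : nat := if Nat.odd r then S r else pred r.

Lemma partner_facts r : (1 <= r)%nat ->
  partner r <> r /\ kap (partner r) = kap r /\ sgZ (partner r) = (- sgZ r)%Z /\
  (forall j, (1 <= j)%nat -> kap j = kap r -> j = r \/ j = partner r) /\
  (Nat.odd r = true -> partner r = S r) /\ (Nat.odd r = false -> S (partner r) = r).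
Proof.
  intros Hr. unfold partner.
  destruct (Nat.Even_or_Odd r) as [[q Hq]|[q Hq]]; subst.
  - rewrite odd_2q. replace (pred (2 * q)) with (2 * (q - 1) + 1)%nat by lia.
    rewrite kap_odd, kap_even, sgZ_odd, sgZ_even. split; [lia|]. split; [lia|]. split; [lia|]. split.
    { intros j Hj Hk. destruct (Nat.Even_or_Odd j) as [[q' Hq']|[q' Hq']]; subst j.
      + rewrite kap_even in Hk. lia. + rewrite kap_odd in Hk. lia. }
    split; intros; try discriminate; lia.
  - rewrite odd_2q1. replace (S (2 * q + 1)) with (2 * S q)%nat by lia.
    rewrite kap_odd, kap_even, sgZ_odd, sgZ_even. split; [lia|]. split; [lia|]. split; [lia|]. split.
    { intros j Hj Hk. destruct (Nat.Even_or_Odd j) as [[q' Hq']|[q' Hq']]; subst j.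
      + rewrite kap_even in Hk. lia. + rewrite kap_odd in Hk. lia. }
    split; intros; try discriminate; lia.
Qed.

Lemma kap_bounds d j : (1 <= j <= 2 * d)%nat -> (1 <= kap j <= d)%nat.
Proof. intros H. apply (kap_range d j H). Qed.

Lemma kap_sgZ_inj j j' : (1 <= j)%nat -> (1 <= j')%nat -> kap j = kap j' -> sgZ j = sgZ j' -> j = j'.
Proof.
  intros H1 H2 Hk Hs.
  destruct (Nat.Even_or_Odd j) as [[q Hq]|[q Hq]]; destruct (Nat.Even_or_Odd j') as [[q' Hq']|[q' Hq']]; subst;
  rewrite ?kap_even, ?kap_odd, ?sgZ_even, ?sgZ_odd in *; try discriminate; lia.
Qed.

Definition good (delta : nat) (p : nat -> R) :=
  (forall k, (1 <= k <= delta)%nat -> 0 <= p k <= 2 * PI) /\ (forall k, (k = 0 \/ delta < k)%nat -> p k = 0).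

Lemma good_upd delta p l x : good delta p -> (1 <= l <= delta)%nat -> 0 <= x <= 2 * PI -> good delta (upd p l x).
Proof.
  intros [H1 H2] Hl Hx. split; intros k0 Hk; unfold upd; destruct (Nat.eqb_spec k0 l); auto; lia.
Qed.

Lemma good_zero delta : good delta (fun _ => 0).
Proof. split; intros; auto. pose proof PI_RGT_0; lra. Qed.

Lemma avg_zero N m : avg N m (fun _ => RtoC 0) = RtoC 0.
Proof. unfold avg. rewrite csum_zero. ring. intros; ring. Qed.

Lemma upd_same p l x : upd p l x l = x.
Proof. unfold upd. rewrite Nat.eqb_refl. auto. Qed.
Lemma upd_other p l x j : j <> l -> upd p l x j = p j.
Proof. intros H; unfold upd. destruct (Nat.eqb_spec j l); auto; lia. Qed.

Lemma split3 (g : nat -> C) d r rp k : (1 <= r <= d)%nat -> (1 <= rp <= d)%nat -> r <> rp ->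
  kap r = k -> kap rp = k -> (forall j, (1 <= j <= d)%nat -> kap j = k -> j = r \/ j = rp) ->
  csum g 1 d = Cplus (csum (fun j => if Nat.eqb (kap j) k then RtoC 0 else g j) 1 d) (Cplus (g r) (g rp)).
Proof.
  intros H1 H2 H3 H4 H5 H6.
  rewrite (csum_ext g (fun j => Cplus (if Nat.eqb (kap j) k then RtoC 0 else g j)
     (Cplus (if Nat.eqb j r then g r else RtoC 0) (if Nat.eqb j rp then g rp else RtoC 0)))).
  - rewrite !csum_plus. f_equal. f_equal.
    + rewrite (csum_single _ 1 d r); auto. rewrite Nat.eqb_refl; auto.
      intros j _ Hj. destruct (Nat.eqb_spec j r); [lia|auto].
    + rewrite (csum_single _ 1 d rp); auto. rewrite Nat.eqb_refl; auto.
      intros j _ Hj. destruct (Nat.eqb_spec j rp); [lia|auto].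
  - intros j Hj. destruct (Nat.eqb_spec (kap j) k) as [E|E].
    + destruct (H6 j Hj E); subst j.
      * rewrite Nat.eqb_refl. destruct (Nat.eqb_spec r rp); [lia|]. ring.
      * rewrite Nat.eqb_refl. destruct (Nat.eqb_spec rp r); [lia|]. ring.
    + destruct (Nat.eqb_spec j r); [subst; lia|]. destruct (Nat.eqb_spec j rp); [subst; lia|]. ring.
Qed.

Section Row.
Variables (delta H : nat) (A B P : nat -> nat -> R) (T r : nat).
Hypotheses (Hd : (1 <= delta)%nat) (HT : (2 <= T)%nat) (Hr : (1 <= r <= 2 * delta)%nat)
  (Hid : forall p, good delta p -> model (2 * delta) H A B P p T r = e p (T + 1) r).

Definition kk := kap r.
Definition ss := sgZ r.
Definition Cr j := Cmat H A B r j.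
Definition Pt t := P (T - 1)%nat t.
Definition ekj j := if Nat.eqb (kap j) kk then sgZ j else 0%Z.
Definition nZ t j := (ekj j * (Z.of_nat t - 1 - (Z.of_nat T - 2)) + ss * (Z.of_nat t - 1))%Z.
Definition alpha p t j := if Nat.eqb (kap j) kk then 0 else (INR t - 1 - (INR T - 2)) * (sg j * p (kap j)).
Definition NN := (4 * T)%nat.

Lemma kk_range : (1 <= kk <= delta)%nat.
Proof. apply kap_bounds; auto. Qed.

Ltac zconv := rewrite ?plus_IZR, ?mult_IZR, ?minus_IZR, ?opp_IZR, <- ?INR_IZR_INZ.

Lemma X_upd p x t j : (1 <= t)%nat -> X (upd p kk x) T r t j = cis (alpha p t j + IZR (nZ t j) * x).
Proof.
  intros Ht. rewrite X_cis by auto. apply cis_ext. unfold alpha, nZ, ekj.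
  change (kap r) with kk. rewrite upd_same. rewrite !sg_sgZ. fold ss.
  destruct (Nat.eqb_spec (kap j) kk) as [E|E].
  - rewrite E, upd_same. zconv. simpl. ring.
  - rewrite upd_other by auto. zconv. simpl. ring.
Qed.

Lemma nZ_bound t j m : (1 <= t <= T)%nat -> (Z.abs m <= Z.of_nat T)%Z -> (Z.abs (nZ t j - m) < Z.of_nat NN)%Z.
Proof.
  intros Ht Hm. unfold nZ, ekj, NN, ss. rewrite Nat2Z.inj_mul.
  destruct (Nat.eqb (kap j) kk); [destruct (sgZ_cases j) as [-> | ->]|];
  destruct (sgZ_cases r) as [-> | ->]; lia.
Qed.

Lemma coef_full p m : good delta p -> (Z.abs m <= Z.of_nat T)%Z ->
  csum (fun t => csum (fun j => Cmult (RtoC (Pt t * Cr j)) (if Z.eqb (nZ t j) m then cis (alpha p t j) else RtoC 0)) 1 (2 * delta)) 1 T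
  = if Z.eqb (ss * Z.of_nat T) m then RtoC 1 else RtoC 0.
Proof.
  intros Hp Hm. pose proof kk_range as Hk.
  assert (HN : (0 < NN)%nat) by (unfold NN; lia).
  assert (E1 : avg NN m (fun x => model (2 * delta) H A B P (upd p kk x) T r) = avg NN m (fun x => e (upd p kk x) (T + 1) r)).
  { apply avg_ext; auto. intros; apply Hid; apply good_upd; auto. }
  rewrite (avg_ext _ _ _ (fun x => csum (fun t => csum (fun j => Cmult (RtoC (Pt t * Cr j)) (cis (alpha p t j + IZR (nZ t j) * x))) 1 (2 * delta)) 1 T)) in E1; auto.
  2:{ intros x _. rewrite model_eq. apply csum_ext; intros t Ht. apply csum_ext; intros j _. rewrite X_upd by lia. reflexivity. }
  rewrite (avg_ext _ _ (fun x => e (upd p kk x) (T + 1) r) (fun x => cis (0 + IZR (ss * Z.of_nat T) * x))) in E1; auto.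
  2:{ intros x _. unfold e. rewrite lam_cis, cis_pow. change (kap r) with kk. rewrite upd_same. apply cis_ext.
      rewrite sg_sgZ. fold ss. replace (T + 1 - 1)%nat with T by lia. zconv. ring. }
  rewrite avg_cis in E1 by (auto; unfold NN, ss; rewrite Nat2Z.inj_mul; destruct (sgZ_cases r) as [-> | ->]; lia).
  rewrite cis_0 in E1. rewrite <- E1. rewrite avg_sum. apply csum_ext; intros t Ht.
  rewrite avg_sum. apply csum_ext; intros j _. rewrite avg_scal, avg_cis; auto. apply nZ_bound; auto.
Qed.

Definition rp := partner r.
Definition Oth p t := csum (fun j => if Nat.eqb (kap j) kk then RtoC 0 else Cmult (RtoC (Cr j)) (cis (alpha p t j))) 1 (2 * delta).

Lemma rp_facts : (1 <= rp <= 2 * delta)%nat /\ rp <> r /\ kap rp = kk /\ sgZ rp = Z.opp ss /\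
  (forall j, (1 <= j)%nat -> kap j = kk -> j = r \/ j = rp).
Proof.
  destruct (partner_facts r ltac:(lia)) as [F1 [F2 [F3 [F4 [F5 F6]]]]].
  unfold rp, kk, ss. split; [|split; [|split; [|split]]]; auto.
  destruct (Nat.odd r) eqn:Ho.
  - rewrite (F5 eq_refl). destruct (Nat.Even_or_Odd r) as [[q Hq]|[q Hq]]; subst r.
    + rewrite odd_2q in Ho; discriminate.
    + lia.
  - specialize (F6 eq_refl). destruct (Nat.Even_or_Odd r) as [[q Hq]|[q Hq]]; subst r.
    + lia.
    + rewrite odd_2q1 in Ho; discriminate.
Qed.

Lemma nZ_r t : nZ t r = (ss * (2 * Z.of_nat t - Z.of_nat T))%Z.
Proof. unfold nZ, ekj. fold kk. rewrite Nat.eqb_refl. fold ss. ring. Qed.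

Lemma nZ_rp t : nZ t rp = (ss * (Z.of_nat T - 2))%Z.
Proof. destruct rp_facts as [_ [_ [E [S _]]]]. unfold nZ, ekj. rewrite E, Nat.eqb_refl, S. ring. Qed.

Lemma nZ_oth t j : kap j <> kk -> nZ t j = (ss * (Z.of_nat t - 1))%Z.
Proof. intros E. unfold nZ, ekj. destruct (Nat.eqb_spec (kap j) kk); [lia|]. ring. Qed.

Lemma alpha_k p t j : kap j = kk -> alpha p t j = 0.
Proof. intros E. unfold alpha. rewrite E, Nat.eqb_refl. auto. Qed.

Lemma coef_red p m : good delta p -> (Z.abs m <= Z.of_nat T)%Z ->
  csum (fun t => Cplus (Cmult (RtoC (Pt t)) (if Z.eqb (ss * (Z.of_nat t - 1)) m then Oth p t else RtoC 0))
    (Cplus (Cmult (RtoC (Pt t * Cr r)) (if Z.eqb (ss * (2 * Z.of_nat t - Z.of_nat T)) m then RtoC 1 else RtoC 0))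
           (Cmult (RtoC (Pt t * Cr rp)) (if Z.eqb (ss * (Z.of_nat T - 2)) m then RtoC 1 else RtoC 0)))) 1 T
  = if Z.eqb (ss * Z.of_nat T) m then RtoC 1 else RtoC 0.
Proof.
  intros Hp Hm. rewrite <- (coef_full p m Hp Hm). apply csum_ext; intros t Ht.
  destruct rp_facts as [R1 [R2 [R3 [R4 R5]]]].
  rewrite (split3 _ (2 * delta) r rp kk); auto; [| intros; apply R5; auto; lia].
  f_equal; [|f_equal].
  - destruct (Z.eqb_spec (ss * (Z.of_nat t - 1)) m) as [E|E].
    + unfold Oth. rewrite <- csum_mult_l. apply csum_ext; intros j _.
      destruct (Nat.eqb_spec (kap j) kk). ring. rewrite nZ_oth, E, Z.eqb_refl by auto. rewrite RtoC_mult. ring.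
    + rewrite csum_zero. ring. intros j _. destruct (Nat.eqb_spec (kap j) kk). auto.
      rewrite nZ_oth by auto. destruct (Z.eqb_spec (ss * (Z.of_nat t - 1)) m); [lia|]. ring.
  - rewrite nZ_r, alpha_k, cis_0 by auto. reflexivity.
  - rewrite nZ_rp, alpha_k, cis_0 by auto. reflexivity.
Qed.

Lemma ss_cases : ss = 1%Z \/ ss = (-1)%Z.
Proof. apply sgZ_cases. Qed.

Lemma eqb_ss a b : Z.eqb (ss * a) (ss * b) = Z.eqb a b.
Proof. destruct ss_cases as [E|E]; rewrite E; destruct (Z.eqb_spec a b) as [H1|H1].
  - subst. apply Z.eqb_refl.
  - apply Z.eqb_neq. lia.
  - subst. apply Z.eqb_refl.
  - apply Z.eqb_neq. lia. Qed.

Ltac zdec := repeat match goal with |- context [Z.eqb ?a ?b] =>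
  let E := fresh "E" in destruct (Z.eqb_spec a b) as [E|E]; try (exfalso; lia) end.

Lemma RtoC_inj a b : RtoC a = RtoC b -> a = b.
Proof. intros H0. apply (f_equal fst) in H0. auto. Qed.

Lemma Zbound_ss a : (Z.abs a <= Z.of_nat T)%Z -> (Z.abs (ss * a) <= Z.of_nat T)%Z.
Proof. destruct ss_cases as [E|E]; rewrite E; lia. Qed.

Lemma row_ii : Pt T * Cr r = 1.
Proof.
  pose proof (coef_red (fun _ => 0) (ss * Z.of_nat T) (good_zero delta) ltac:(apply Zbound_ss; lia)) as E.
  rewrite Z.eqb_refl in E. rewrite (csum_single _ 1 T T) in E; [| lia |].
  - apply RtoC_inj. rewrite <- E. rewrite !eqb_ss. zdec. ring.
  - intros t Ht Hne. rewrite !eqb_ss. zdec. ring.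
Qed.

Lemma Oth_T p : good delta p -> Oth p T = RtoC 0.
Proof.
  intros Hp.
  pose proof (coef_red p (ss * (Z.of_nat T - 1)) Hp ltac:(apply Zbound_ss; lia)) as E.
  rewrite (csum_single _ 1 T T) in E; [| lia |].
  - rewrite !eqb_ss in E. revert E. zdec. intros Heq.
    assert (HP : Pt T <> 0) by (intros Hc; pose proof row_ii; rewrite Hc in H0; lra).
    replace (Oth p T) with (Cmult (RtoC (/ Pt T)) (Cmult (RtoC (Pt T)) (Oth p T))).
    + replace (Cmult (RtoC (Pt T)) (Oth p T)) with (RtoC 0). ring.
      rewrite <- Heq. ring.
    + rewrite Cmult_assoc, <- RtoC_mult, Rinv_l by auto. ring.
  - intros t Ht Hne. rewrite !eqb_ss. zdec. ring.
Qed.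

Lemma row_iv j0 : (1 <= j0 <= 2 * delta)%nat -> kap j0 <> kk -> Cr j0 = 0.
Proof.
  intros Hj0 Hk0. set (l := kap j0).
  assert (Hl : (1 <= l <= delta)%nat) by (apply kap_bounds; auto).
  set (f := fun j => if Nat.eqb (kap j) l then sgZ j else 0%Z).
  assert (E1 : avg 4 (sgZ j0) (fun x => Oth (upd (fun _ => 0) l x) T) = avg 4 (sgZ j0) (fun _ => RtoC 0)).
  { apply avg_ext; [lia|]. intros x Hx. apply Oth_T. apply good_upd; auto. apply good_zero. }
  rewrite avg_zero in E1.
  rewrite (avg_ext _ _ _ (fun x => csum (fun j => Cmult (if Nat.eqb (kap j) kk then RtoC 0 else RtoC (Cr j)) (cis (0 + IZR (f j) * x))) 1 (2 * delta))) in E1.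
  2: lia.
  2:{ intros x _. unfold Oth. apply csum_ext; intros j Hj. destruct (Nat.eqb (kap j) kk) eqn:Ek. cbv beta iota. ring.
      f_equal. apply cis_ext. unfold alpha, f. rewrite Ek.
      rewrite sg_sgZ. unfold upd. destruct (Nat.eqb_spec (kap j) l); simpl; ring. }
  rewrite avg_sum in E1. rewrite (csum_ext _ (fun j => Cmult (if Nat.eqb (kap j) kk then RtoC 0 else RtoC (Cr j)) (if Z.eqb (f j) (sgZ j0) then cis 0 else RtoC 0))) in E1.
  2:{ intros j _. rewrite avg_scal, avg_cis; auto; try lia.
      unfold f. destruct (Nat.eqb (kap j) l); [destruct (sgZ_cases j) as [-> | ->]|]; destruct (sgZ_cases j0) as [-> | ->]; simpl; lia. }
  rewrite (csum_single _ 1 (2 * delta) j0) in E1; auto.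
  - unfold f in E1. fold l in E1. rewrite Nat.eqb_refl, Z.eqb_refl, cis_0 in E1.
    destruct (Nat.eqb_spec l kk); [contradiction|]. apply RtoC_inj. rewrite <- E1. ring.
  - intros j Hj Hne. destruct (Nat.eqb_spec (kap j) kk). ring. unfold f.
    destruct (Nat.eqb_spec (kap j) l).
    + destruct (Z.eqb_spec (sgZ j) (sgZ j0)). exfalso; apply Hne; apply kap_sgZ_inj; auto; lia. ring.
    + destruct (Z.eqb_spec 0 (sgZ j0)). destruct (sgZ_cases j0); lia. ring.
Qed.

Lemma Oth_zero p t : Oth p t = RtoC 0.
Proof.
  unfold Oth. apply csum_zero. intros j Hj. destruct (Nat.eqb_spec (kap j) kk). auto.
  rewrite row_iv by auto. ring.
Qed.

Lemma row_i t0 : (1 <= t0)%nat -> (t0 < T - 1)%nat -> Pt t0 = 0.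
Proof.
  intros H1 H2.
  pose proof (coef_red (fun _ => 0) (ss * (2 * Z.of_nat t0 - Z.of_nat T)) (good_zero delta) ltac:(apply Zbound_ss; lia)) as E.
  rewrite (csum_single _ 1 T t0) in E; [| lia |].
  - rewrite Oth_zero, !eqb_ss in E. revert E. zdec; intros Heq.
    assert (Pt t0 * Cr r = 0). { apply RtoC_inj. rewrite <- Heq. ring. }
    pose proof row_ii. assert (Cr r <> 0) by (intros Hc; rewrite Hc in H3; lra).
    apply Rmult_integral in H0. destruct H0; auto. contradiction.
  - intros t Ht Hne. rewrite Oth_zero, !eqb_ss. zdec; ring.
Qed.

Lemma row_iii : Pt T * Cr rp + (Cr r + Cr rp) * Pt (T - 1)%nat = 0.
Proof.
  pose proof (coef_red (fun _ => 0) (ss * (Z.of_nat T - 2)) (good_zero delta) ltac:(apply Zbound_ss; lia)) as E.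
  rewrite !eqb_ss, Z.eqb_refl in E.
  destruct (Z.eqb_spec (Z.of_nat T) (Z.of_nat T - 2)); [lia|].
  rewrite (csum_ext _ (fun t => Cplus (if Nat.eqb t (T - 1) then RtoC (Pt t * Cr r) else RtoC 0)
        (Cplus (if Nat.eqb t (T - 1) then RtoC (Pt t * Cr rp) else RtoC 0) (if Nat.eqb t T then RtoC (Pt t * Cr rp) else RtoC 0)))) in E.
  2:{ intros t Ht. rewrite Oth_zero, !eqb_ss. destruct (Nat.eqb_spec t (T - 1)).
      - subst t. destruct (Nat.eqb_spec (T - 1) T); [lia|]. zdec. ring.
      - destruct (Nat.eqb_spec t T).
        + subst t. zdec. ring.
        + rewrite row_i by lia. zdec. change (@eq C) with (@eq C). rewrite !Rmult_0_l. ring. }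
  rewrite !csum_plus in E.
  rewrite (csum_single _ 1 T (T - 1)) in E; [| lia | intros t _ Hne; destruct (Nat.eqb_spec t (T - 1)); [lia|auto]].
  rewrite (csum_single (fun t => if Nat.eqb t (T - 1) then RtoC (Pt t * Cr rp) else RtoC 0) 1 T (T - 1)) in E;
    [| lia | intros t _ Hne; destruct (Nat.eqb_spec t (T - 1)); [lia|auto]].
  rewrite (csum_single (fun t => if Nat.eqb t T then RtoC (Pt t * Cr rp) else RtoC 0) 1 T T) in E;
    [| lia | intros t _ Hne; destruct (Nat.eqb_spec t T); [lia|auto]].
  rewrite !Nat.eqb_refl in E. apply RtoC_inj. rewrite <- E. rewrite <- !RtoC_plus. f_equal. ring.
Qed.

End Row.

Lemma loss_id delta H Tmax A B P : (1 <= delta)%nat -> loss delta H Tmax A B P = 0 ->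
  forall T, (2 <= T <= Tmax)%nat -> forall p, good delta p -> forall i, (1 <= i <= 2 * delta)%nat ->
  model (2 * delta) H A B P p T i = e p (T + 1) i.
Proof.
  intros Hd Hl T HT p Hp i Hi.
  assert (Lf : forall T', Lip delta (fun q => sqerr (2 * delta) H A B P q T')) by (intros; apply LB_Lip, LB_sqerr).
  assert (Hnn : forall T', 0 <= expect delta (fun q => sqerr (2 * delta) H A B P q T')).
  { intros; apply (E_nonneg delta); auto. intros; apply sqerr_nonneg. }
  unfold loss in Hl.
  destruct (rsum_pos (fun T' => expect delta (fun q => sqerr (2 * delta) H A B P q T')) 2 Tmax) as [_ H2].
  { intros; auto. }
  specialize (H2 T HT). specialize (Hnn T).
  assert (HE : expect delta (fun q => sqerr (2 * delta) H A B P q T) = 0) by lra.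
  destruct Hp as [Hb Ho].
  pose proof (E_zero delta delta _ (Lf T) ltac:(intros; apply sqerr_nonneg) HE p Hb Ho) as Hs.
  unfold sqerr in Hs.
  destruct (rsum_pos (fun i0 => Cmod (Cminus (model (2 * delta) H A B P p T i0) (e p (T + 1) i0)) ^ 2) 1 (2 * delta)) as [_ H3].
  { intros; apply pow2_ge_0. }
  specialize (H3 i Hi). rewrite Hs in H3.
  pose proof (pow2_ge_0 (Cmod (Cminus (model (2 * delta) H A B P p T i) (e p (T + 1) i)))).
  assert (Hc : Cmod (Cminus (model (2 * delta) H A B P p T i) (e p (T + 1) i)) = 0) by nra.
  apply Cmod_eq_0 in Hc.
  replace (model (2 * delta) H A B P p T i) with (Cplus (Cminus (model (2 * delta) H A B P p T i) (e p (T + 1) i)) (e p (T + 1) i)) by ring.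
  rewrite Hc. ring.
Qed.

Theorem proposition6 (delta H Tmax : nat) (A B P : nat -> nat -> R) :
  (1 <= delta)%nat -> (1 <= H)%nat -> (2 <= Tmax)%nat ->
  loss delta H Tmax A B P = 0 ->
  forall T : nat, (2 <= T <= Tmax)%nat ->
    (forall t : nat, (1 <= t < T - 1)%nat -> P (T - 1)%nat t = 0) /\
    (forall i : nat, (1 <= i <= 2 * delta)%nat -> P (T - 1)%nat T * Cmat H A B i i = 1) /\
    (forall i : nat, (1 <= i <= delta)%nat ->
       P (T - 1)%nat T * Cmat H A B (2 * i - 1) (2 * i)
         + (Cmat H A B (2 * i - 1) (2 * i - 1) + Cmat H A B (2 * i - 1) (2 * i))
           * P (T - 1)%nat (T - 1)%nat = 0 /\
       P (T - 1)%nat T * Cmat H A B (2 * i) (2 * i - 1)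
         + (Cmat H A B (2 * i) (2 * i) + Cmat H A B (2 * i) (2 * i - 1))
           * P (T - 1)%nat (T - 1)%nat = 0) /\
    (forall i j : nat, (1 <= i <= delta)%nat -> (1 <= j <= 2 * delta)%nat ->
       j <> (2 * i - 1)%nat -> j <> (2 * i)%nat ->
       Cmat H A B (2 * i - 1) j = 0 /\ Cmat H A B (2 * i) j = 0).
Proof.
  intros Hd HH HTm Hl T HT.
  assert (Hid : forall r, (1 <= r <= 2 * delta)%nat -> forall p, good delta p ->
            model (2 * delta) H A B P p T r = e p (T + 1) r).
  { intros r Hr p Hp. apply (loss_id delta H Tmax A B P); auto. }
  assert (HT2 : (2 <= T)%nat) by lia.
  assert (Podd : forall i, (1 <= i)%nat -> partner (2 * i - 1) = (2 * i)%nat).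
  { intros i Hi. destruct (partner_facts (2 * i - 1) ltac:(lia)) as [_ [_ [_ [_ [F5 _]]]]].
    replace (2 * i - 1)%nat with (2 * (i - 1) + 1)%nat in * by lia. rewrite F5 by apply odd_2q1. lia. }
  assert (Peven : forall i, (1 <= i)%nat -> partner (2 * i) = (2 * i - 1)%nat).
  { intros i Hi. destruct (partner_facts (2 * i) ltac:(lia)) as [_ [_ [_ [_ [_ F6]]]]].
    specialize (F6 (odd_2q i)). lia. }
  split; [|split; [|split]].
  - intros t Ht. apply (row_i delta H A B P T 1%nat Hd HT2 ltac:(lia) (Hid 1%nat ltac:(lia)) t); lia.
  - intros i Hi. apply (row_ii delta H A B P T i Hd HT2 Hi (Hid i Hi)).
  - intros i Hi. split.
    + pose proof (row_iii delta H A B P T (2 * i - 1) Hd HT2 ltac:(lia) (Hid (2 * i - 1)%nat ltac:(lia))) as R.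
      unfold rp, Cr, Pt in R. rewrite Podd in R by lia. exact R.
    + pose proof (row_iii delta H A B P T (2 * i) Hd HT2 ltac:(lia) (Hid (2 * i)%nat ltac:(lia))) as R.
      unfold rp, Cr, Pt in R. rewrite Peven in R by lia. exact R.
  - intros i j Hi Hj H1 H2.
    assert (Hk1 : kap j <> kk (2 * i - 1)).
    { intros Hc. destruct (partner_facts (2 * i - 1) ltac:(lia)) as [_ [_ [_ [F4 _]]]].
      destruct (F4 j ltac:(lia) Hc) as [E|E]; [lia|]. rewrite Podd in E by lia. lia. }
    assert (Hk2 : kk (2 * i - 1) = kk (2 * i)).
    { unfold kk. replace (2 * i - 1)%nat with (2 * (i - 1) + 1)%nat by lia. rewrite kap_odd, kap_even. lia. }
    split.
    + apply (row_iv delta H A B P T (2 * i - 1) Hd HT2 ltac:(lia) (Hid (2 * i - 1)%nat ltac:(lia)) j Hj Hk1).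
    + apply (row_iv delta H A B P T (2 * i) Hd HT2 ltac:(lia) (Hid (2 * i)%nat ltac:(lia)) j Hj). rewrite <- Hk2. auto.
Qed.
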